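(* Let $G$ be a finite simple graph whose edge ideal $I=I(G)$ satisfies $v(I)=1$. Then $v(I^{n+1})=2n+1$ for all $n\ge 1$.
   Context: $K$ is a field and $S=K[x_1,\dots,x_t]$ is standard graded, with the vertices of $G$ being $x_1,\dots,x_t$. The edge ideal is $I(G)=\langle x_ix_j : \{x_i,x_j\}\text{ an edge of } G\rangle$. For a proper graded ideal $J$, the $v$-number is $v(J)=\min\{k\ge 0 : \exists f\in S_k,\ \mathcal P\in\operatorname{Ass}(S/J) \text{ with } (J:f)=\mathcal P\}$. *)

(* Defs.v *)
From HB Require Import structures.
From mathcomp Require Import all_boot all_algebra.
From mathcomp Require Import mpoly.
Set Implicit Arguments. Unset Strict Implicit. Unset Printing Implicit Defensive.
Import GRing.Theory.
Local Open Scope ring_scope.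

Section Ideals.
Variables (K : fieldType) (t : nat).
Local Notation S := {mpoly K[t]}.

Definition is_ideal (J : S -> Prop) : Prop :=
  [/\ J 0, (forall a b, J a -> J b -> J (a + b)) & (forall r a, J a -> J (r * a))].

Definition ideal_gen (gens : S -> Prop) : S -> Prop :=
  fun f => exists s : seq (S * S),
    (forall x, x \in s -> gens x.2) /\ f = \sum_(x <- s) x.1 * x.2.

Definition ideal_pow (J : S -> Prop) (m : nat) : S -> Prop :=
  ideal_gen (fun g => exists s : seq S,
    [/\ size s = m, (forall x, x \in s -> J x) & g = \prod_(x <- s) x]).

Definition colon (J : S -> Prop) (f : S) : S -> Prop := fun g => J (g * f).

Definition same_ideal (A B : S -> Prop) : Prop := forall g, A g <-> B g.

Definition is_prime_ideal (P : S -> Prop) : Prop :=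
  [/\ is_ideal P, ~ P 1 & (forall a b, P (a * b) -> P a \/ P b)].

(* Ass(S/J): prime ideals which are annihilators (J : g) of elements of S/J *)
Definition Ass (J : S -> Prop) (P : S -> Prop) : Prop :=
  is_prime_ideal P /\ exists g : S, same_ideal (colon J g) P.

Definition v_number_is (J : S -> Prop) (k : nat) : Prop :=
  (exists (f : S) (P : S -> Prop),
      [/\ f \is k.-homog, Ass J P & same_ideal (colon J f) P]) /\
  (forall (k' : nat) (f : S) (P : S -> Prop),
      (k' < k)%N -> f \is k'.-homog -> Ass J P -> ~ same_ideal (colon J f) P).

Definition edge_ideal (e : rel 'I_t) : S -> Prop :=
  ideal_gen (fun g => exists i j : 'I_t, e i j /\ g = 'X_i * 'X_j).

End Ideals.

Definition simple_graph (t : nat) (e : rel 'I_t) : Prop :=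
  ssrbool.symmetric e /\ ssrbool.irreflexive e.

(* Main.v *)
Require Import Defs.
From mathcomp Require Import all_boot all_algebra.
From mathcomp Require Import mpoly.
Set Implicit Arguments. Unset Strict Implicit. Unset Printing Implicit Defensive.
Import GRing.Theory.
Local Open Scope ring_scope.

Section Aux.
Variables (K : fieldType) (t : nat).
Local Notation S := {mpoly K[t]}.

Lemma ideal_gen0 (gens : S -> Prop) : ideal_gen gens 0.
Proof. by exists [::]; split => //; rewrite big_nil. Qed.

Lemma ideal_genD (gens : S -> Prop) a b :
  ideal_gen gens a -> ideal_gen gens b -> ideal_gen gens (a + b).
Proof.
move=> [s1 [h1 ->]] [s2 [h2 ->]]; exists (s1 ++ s2); split; last by rewrite big_cat.
by move=> x; rewrite mem_cat => /orP [/h1|/h2].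
Qed.

Lemma ideal_genM (gens : S -> Prop) r a : ideal_gen gens a -> ideal_gen gens (r * a).
Proof.
move=> [s [h ->]]; exists [seq (r * x.1, x.2) | x <- s]; split.
  by move=> x /mapP [y ys] ->; exact: (h y ys).
by rewrite big_map mulr_sumr; apply: eq_bigr => x _; rewrite mulrA.
Qed.

Lemma ideal_gen_sum (gens : S -> Prop) (I : eqType) (r : seq I) (F : I -> S) :
  (forall i, i \in r -> ideal_gen gens (F i)) -> ideal_gen gens (\sum_(i <- r) F i).
Proof.
elim: r => [|a r IH] H; first by rewrite big_nil; exact: ideal_gen0.
rewrite big_cons; apply: ideal_genD; first by apply: H; rewrite inE eqxx.
by apply: IH => i ir; apply: H; rewrite inE ir orbT.
Qed.

Lemma ideal_gen_gen (gens : S -> Prop) g : gens g -> ideal_gen gens g.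
Proof.
move=> hg; exists [:: (1, g)]; split; first by move=> x; rewrite inE => /eqP ->.
by rewrite big_cons big_nil addr0 mul1r.
Qed.

Lemma msuppS0 : msupp (0 : S) = [::].
Proof. by apply/eqP; rewrite msupp_eq0. Qed.

Variable e : rel 'I_t.

Definition em (p : 'I_t * 'I_t) : 'X_{1..t} := (U_(p.1) + U_(p.2))%MM.
Definition msum (s : seq ('I_t * 'I_t)) : 'X_{1..t} :=
  foldr (fun p acc => em p + acc)%MM 0%MM s.
Definition Dk (k : nat) (m : 'X_{1..t}) := exists s,
  [/\ size s = k, all (fun p => e p.1 p.2) s & (msum s <= m)%MM].
Definition Qk k (p : S) := forall m, m \in msupp p -> Dk k m.

Lemma msum_cat s1 s2 : msum (s1 ++ s2) = (msum s1 + msum s2)%MM.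
Proof. by elim: s1 => [|a s IH] /=; rewrite ?add0m // IH addmA. Qed.

Lemma lem_add (a b c d : 'X_{1..t}) :
  (a <= b)%MM -> (c <= d)%MM -> (a + c <= b + d)%MM.
Proof.
move=> /mnm_lepP h1 /mnm_lepP h2; apply/mnm_lepP => i; rewrite !mnmDE.
exact: leq_add.
Qed.

Lemma Dk_add a b m1 m2 : Dk a m1 -> Dk b m2 -> Dk (a + b) (m1 + m2).
Proof.
move=> [s1 [z1 a1 l1]] [s2 [z2 a2 l2]]; exists (s1 ++ s2); split.
- by rewrite size_cat z1 z2.
- by rewrite all_cat a1 a2.
- by rewrite msum_cat; exact: lem_add.
Qed.

Lemma Dk0 m : Dk 0 m.
Proof. by exists [::]; split => //; apply/mnm_lepP => i; rewrite mnm0E. Qed.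

Lemma Dk_le k m m' : Dk k m -> (m <= m')%MM -> Dk k m'.
Proof. by move=> [s [z a l]] h; exists s; split => //; exact: lepm_trans l h. Qed.

Lemma Qk0 k : Qk k 0.
Proof. by move=> m; rewrite msuppS0. Qed.

Lemma QkD k p q : Qk k p -> Qk k q -> Qk k (p + q).
Proof. by move=> hp hq m /msuppD_le; rewrite mem_cat => /orP [/hp|/hq]. Qed.

Lemma QkM a b p q : Qk a p -> Qk b q -> Qk (a + b) (p * q).
Proof.
move=> hp hq m /msuppM_le /allpairsP [[m1 m2] [/= h1 h2 ->]].
exact: Dk_add (hp _ h1) (hq _ h2).
Qed.

Lemma Qk_r k r q : Qk k q -> Qk k (r * q).
Proof. by move=> hq; have := QkM (a := 0) (fun m _ => Dk0 m) hq. Qed.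

Lemma Qk_gen k (gens : S -> Prop) f :
  (forall g, gens g -> Qk k g) -> ideal_gen gens f -> Qk k f.
Proof.
move=> hg [s [hs ->]]; elim: s hs => [|a s IH] hs; first by rewrite big_nil; exact: Qk0.
rewrite big_cons; apply: QkD; first by apply: Qk_r; apply: hg; apply: hs; rewrite inE eqxx.
by apply: IH => x xs; apply: hs; rewrite inE xs orbT.
Qed.

Lemma Qk_edge f : ideal_gen (fun g => exists i j : 'I_t, e i j /\ g = 'X_i * 'X_j) f -> Qk 1 f.
Proof.
apply: Qk_gen => g [i [j [eij ->]]] m; rewrite -mpolyXD msuppX inE => /eqP ->.
exists [:: (i, j)]; split => //=; first by rewrite eij.
by rewrite addm0; exact: lepm_refl.
Qed.

Lemma Qk_prod (J : S -> Prop) (s : seq S) :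
  (forall x, J x -> Qk 1 x) -> (forall x, x \in s -> J x) -> Qk (size s) (\prod_(x <- s) x).
Proof.
move=> hJ; elim: s => [|a s IH] hs.
  by rewrite big_nil => m _; exact: Dk0.
rewrite big_cons /=; rewrite -add1n; apply: QkM.
  by apply: hJ; apply: hs; rewrite inE eqxx.
by apply: IH => x xs; apply: hs; rewrite inE xs orbT.
Qed.

Lemma Qk_pow m f : ideal_pow (@edge_ideal K t e) m f -> Qk m f.
Proof.
apply: Qk_gen => g [s [<- hs ->]]; apply: Qk_prod hs; exact: Qk_edge.
Qed.

Lemma mdeg_le (m1 m2 : 'X_{1..t}) : (m1 <= m2)%MM -> (mdeg m1 <= mdeg m2)%N.
Proof. by move=> /mnm_lepP h; rewrite !mdegE; apply: leq_sum => i _; exact: h. Qed.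

Lemma mdeg_msum s : mdeg (msum s) = (2 * size s)%N.
Proof.
elim: s => [|a s IH] /=; first by rewrite mdeg0.
by rewrite mdegD IH /em mdegD !mdeg1 mulnS.
Qed.

Lemma Dk_deg k m : Dk k m -> (2 * k <= mdeg m)%N.
Proof. by move=> [s [<- _ l]]; rewrite -mdeg_msum; exact: mdeg_le. Qed.

End Aux.

Lemma prod_nseq (R : comRingType) n (a : R) : \prod_(z <- nseq n a) z = a ^+ n.
Proof. by elim: n => [|n IH]; rewrite ?big_nil ?expr0 // /= big_cons IH exprS. Qed.

Section Sigma.
Variables (K : fieldType) (t : nat) (e : rel 'I_t) (x : 'I_t).
Local Notation S := {mpoly K[t]}.

Definition phi (m : 'X_{1..t}) : nat := (\sum_(i | e x i) m i)%N.

Lemma phiD m1 m2 : phi (m1 + m2)%MM = (phi m1 + phi m2)%N.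
Proof. by rewrite /phi -big_split; apply: eq_bigr => i _; rewrite mnmDE. Qed.

Lemma phi0 : phi 0%MM = 0%N.
Proof. by rewrite /phi big1 // => i _; rewrite mnm0E. Qed.

Lemma phiMn m k : phi (m *+ k)%MM = (phi m * k)%N.
Proof.
elim: k => [|k IH]; first by rewrite mulm0n phi0 muln0.
by rewrite mulmS phiD IH mulnS.
Qed.

Lemma phiU i : phi U_(i)%MM = e x i.
Proof.
rewrite /phi big_mkcond (bigD1 i) //= big1 => [|j /negbTE nij].
  by rewrite mnm1E eqxx addn0; case: (e x i).
by rewrite mnm1E eq_sym nij; case: ifP.
Qed.

Lemma phi_le m1 m2 : (m1 <= m2)%MM -> (phi m1 <= phi m2)%N.
Proof. by move=> /mnm_lepP h; apply: leq_sum => i _; exact: h. Qed.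

Hypothesis Hdom : forall i j, e i j -> e x i || e x j.

Lemma phi_msum s : all (fun p => e p.1 p.2) s -> (size s <= phi (msum s))%N.
Proof.
elim: s => [|[i j] s IH] //= /andP [eij hs].
rewrite phiD /em phiD !phiU -add1n; apply: leq_add; last exact: IH.
by move: (Hdom eij); case: (e x i); case: (e x j).
Qed.

Lemma Dk_phi k m : Dk e k m -> (k <= phi m)%N.
Proof. by move=> [s [<- a l]]; apply: leq_trans (phi_msum a) (phi_le l). Qed.

Definition lq : t.-tuple S := [tuple (if e x i then 0 else 'X_i) | i < t].
Definition sigma (p : S) : S := p \mPo lq.

Lemma sigmaX m : sigma 'X_[m] = if phi m == 0%N then 'X_[m] else 0.
Proof.
rewrite /sigma comp_mpolyX; case: eqP => [h0|hn].
  rewrite [RHS]mpolyXE_id; apply: eq_bigr => i _; rewrite tnth_mktuple.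
  case: ifP => // exi.
  have -> : m i = 0%N.
    by move: h0; rewrite /phi (bigD1 i) //= => /eqP; rewrite addn_eq0 => /andP [/eqP].
  by rewrite !expr0.
case: (pickP (fun i => e x i && (m i != 0%N))) => [i /andP [exi mi] | H].
  by rewrite (bigD1 i) //= tnth_mktuple exi expr0n (negbTE mi) mul0r.
exfalso; apply: hn; rewrite /phi big1 // => j exj.
by have := H j; rewrite exj /= => /negbFE /eqP.
Qed.

Lemma sigmaE p : sigma p = \sum_(m <- msupp p) p@_m *: sigma 'X_[m].
Proof.
rewrite {1}(mpolyE p) /sigma raddf_sum; apply: eq_bigr => m _.
exact: comp_mpolyZ.
Qed.

Lemma sigma_mul p q : sigma (p * q) = sigma p * sigma q.
Proof. by rewrite /sigma rmorphM. Qed.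

Lemma sigma_add p q : sigma (p + q) = sigma p + sigma q.
Proof. by rewrite /sigma raddfD. Qed.

Lemma sigma1 : sigma 1 = 1.
Proof. by rewrite /sigma comp_mpoly1. Qed.

Lemma sigma0 : sigma 0 = 0.
Proof. by rewrite /sigma raddf0. Qed.

Lemma prime_sigma : is_prime_ideal (fun g : S => sigma g = 0).
Proof.
split.
- split; first exact: sigma0.
  + by move=> a b ha hb; rewrite sigma_add ha hb addr0.
  + by move=> r a ha; rewrite sigma_mul ha mulr0.
- by rewrite sigma1; apply/eqP; exact: oner_neq0.
- by move=> a b; rewrite sigma_mul => /eqP; rewrite mulf_eq0 => /orP [/eqP|/eqP]; [left|right].
Qed.

End Sigma.

From mathcomp Require Import zify.

Section Main.
Variables (K : fieldType) (t : nat) (e : rel 'I_t).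
Local Notation S := {mpoly K[t]}.
Local Notation I := (@edge_ideal K t e).

Lemma edge_in (i j : 'I_t) : e i j -> I ('X_i * 'X_j).
Proof. by move=> eij; apply: ideal_gen_gen; exists i, j. Qed.

Lemma Xneq0 (m : 'X_{1..t}) : ('X_[m] : S) != 0.
Proof.
apply/eqP => h; have := mcoeffX K m m; rewrite h mcoeff0 eqxx => /eqP.
by rewrite eq_sym oner_eq0.
Qed.

Variables (x y : 'I_t).
Hypothesis Hirr : irreflexive e.
Hypothesis exy : e x y.
Hypothesis Hdom : forall i j, e i j -> e x i || e x j.

Definition fmon n : 'X_{1..t} := (U_(x) *+ n.+1 + U_(y) *+ n)%MM.

Lemma UB_colon n (g : S) :
  ideal_pow I n.+1 (g * 'X_[fmon n]) <-> sigma e x g = 0.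
Proof.
split => [Hg | H0].
  rewrite sigmaE big1_seq // => m /andP [_ ms].
  rewrite sigmaX; case: eqP => [h0|]; last by rewrite scaler0.
  exfalso.
  have : (fmon n + m)%MM \in msupp (g * 'X_[fmon n]).
    by rewrite mcoeff_msupp mcoeffMX -mcoeff_msupp.
  move/(Qk_pow Hg)/(Dk_phi Hdom); rewrite phiD h0 addn0 /fmon phiD !phiMn !phiU.
  by rewrite Hirr exy /= mul0n mul1n ltnn.
have -> : g = g - sigma e x g by rewrite H0 subr0.
rewrite sigmaE {1}(mpolyE g) -sumrB mulr_suml; apply: ideal_gen_sum => m _.
rewrite -scalerBr -scalerAl -mul_mpolyC; apply: ideal_genM.
rewrite sigmaX; case: eqP => [_|hn].
  by rewrite subrr mul0r; exact: ideal_gen0.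
rewrite subr0.
case: (pickP (fun i => e x i && (m i != 0%N))) => [i /andP [exi mi] | H]; last first.
  exfalso; apply: hn; rewrite /phi big1 // => j exj.
  by have := H j; rewrite exj /= => /negbFE /eqP.
have -> : ('X_[m] * 'X_[fmon n] : S) =
   'X_[m - U_(i)] * \prod_(z <- ('X_x * 'X_i) :: nseq n ('X_x * 'X_y)) z.
  rewrite big_cons prod_nseq -!mpolyXD mpolyXn -!mpolyXD; congr 'X_[_].
  apply/mnmP => j; rewrite /fmon !(mnmDE, mnmBE, mulmnE, mnm1E).
  move: mi; case: (x =P j); case: (i =P j); case: (y =P j) => /= *; subst; lia.
apply: ideal_genM; apply: ideal_gen_gen.
exists (('X_x * 'X_i) :: nseq n ('X_x * 'X_y)); split => //=.
  by rewrite size_nseq.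
move=> z; rewrite inE mem_nseq => /orP [/eqP ->|/andP [_ /eqP ->]]; exact: edge_in.
Qed.

Lemma LB n k' (f : S) (P : S -> Prop) : (k' < 2 * n + 1)%N -> f \is k'.-homog ->
  Ass (ideal_pow I n.+1) P -> ~ same_ideal (colon (ideal_pow I n.+1) f) P.
Proof.
move=> hk hf [[[P0 PD PM] P1 Pp] _] Hs.
have JP : forall g, ideal_pow I n.+1 g -> P g.
  by move=> g Jg; apply/Hs; rewrite /colon mulrC; exact: ideal_genM.
have fn0 : f != 0.
  apply/eqP => f0; apply: P1; apply/Hs; rewrite /colon f0 mulr0; exact: ideal_gen0.
have Pprod : forall s, P (\prod_(z <- s) z) -> exists2 z, z \in s & P z.
  elim => [|a s IH]; first by rewrite big_nil.
  rewrite big_cons => /Pp [Pa|/IH [z zs Pz]]; first by exists a; rewrite ?inE ?eqxx.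
  by exists z; rewrite // inE zs orbT.
have key : forall a, P 'X_a -> False.
  move=> a /Hs Ja.
  have hom : 'X_a * f \is (1 + k').-homog.
    by apply: dhomogM => //; rewrite dhomogX; apply/eqP; exact: mdeg1.
  have nz : 'X_a * f != 0 by rewrite mulf_neq0 // Xneq0.
  have := Qk_pow Ja (mlead_supp nz) => /Dk_deg.
  rewrite (dhomog_mf hom (mlead_supp nz)); lia.
have : P (\prod_(z <- nseq n.+1 ('X_x * 'X_y)) z).
  apply: JP; apply: ideal_gen_gen; exists (nseq n.+1 ('X_x * 'X_y)); split => //.
    by rewrite size_nseq.
  by move=> z; rewrite mem_nseq => /andP [_ /eqP ->]; exact: edge_in.
by case/Pprod => z; rewrite mem_nseq => /andP [_ /eqP ->] /Pp [] /key.
Qed.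

End Main.

Section Extract.
Variables (K : fieldType) (t : nat) (e : rel 'I_t).
Local Notation S := {mpoly K[t]}.
Local Notation I := (@edge_ideal K t e).

Lemma HX : simple_graph e -> v_number_is I 1 ->
  exists x y, e x y /\ forall i j, e i j -> e x i || e x j.
Proof.
move=> [Hsym Hirr] [[f0 [P0 [hf0 HA Hs]]] Hmin].
have [[[Q0 _ _] Q1 Qp] _] := HA.
have IP : forall g, I g -> P0 g.
  by move=> g Ig; apply/Hs; rewrite /colon mulrC; exact: ideal_genM.
have f0n0 : f0 != 0.
  apply/eqP => hf; apply: Q1; apply/Hs; rewrite /colon hf mulr0; exact: ideal_gen0.
have [x hx] : exists x, mlead f0 = U_(x)%MM.
  have := dhomog_mf hf0 (mlead_supp f0n0).
  by move/eqP/mdeg1P => [z /eqP ->]; exists z.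
have Ctx : forall z, P0 'X_z -> e x z.
  move=> z /Hs Iz.
  have inz : (U_(z) + U_(x))%MM \in msupp ('X_z * f0).
    by rewrite mulrC mcoeff_msupp mcoeffMX -hx mleadc_eq0.
  have [s [hs hall hle]] := Qk_edge Iz inz.
  case: s hs hall hle => [|[i j] [|]] //= _; rewrite andbT => eij hle.
  have hi := mnm_lepP hle i; have hj := mnm_lepP hle j.
  rewrite !mnmDE !mnm1E mnm0E in hi hj.
  have hi' : (i == z) || (i == x).
    by move: hi; rewrite eqxx (eq_sym z) (eq_sym x); case: (i == z); case: (i == x); case: (j == i).
  have hj' : (j == z) || (j == x).
    by move: hj; rewrite eqxx (eq_sym z j) (eq_sym x j); case: (j == z); case: (j == x); case: (i == j).
  case/orP: hi' => /eqP ?; case/orP: hj' => /eqP ?; subst;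
    first [ by rewrite Hirr in eij | by [] | by rewrite Hsym ].
have Dom : forall i j, e i j -> e x i || e x j.
  move=> i j eij; have /Qp [/Ctx -> //|/Ctx ->] := IP _ (@edge_in K t e i j eij).
  by rewrite orbT.
case: (pickP (fun p : 'I_t * 'I_t => e p.1 p.2)) => [[i j] /= eij | Hno].
  by case/orP: (Dom i j eij) => h; [exists x, i | exists x, j].
exfalso.
have I0 : forall g, I g -> g = 0.
  move=> g [s [hs ->]]; case: s hs => [|a s] hs; first by rewrite big_nil.
  have [i [j [eij _]]] := hs a (mem_head a s).
  by have := Hno (i, j); rewrite /= eij.
apply: (Hmin 0%N 1 P0) => //; first exact: dhomog1.
move=> g; split.
  by rewrite /colon mulr1 => /I0 ->.
move=> /Hs /I0 /eqP; rewrite mulf_eq0 (negbTE f0n0) orbF => /eqP ->.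
by rewrite /colon mul0r; exact: ideal_gen0.
Qed.

End Extract.

Theorem corollary4p16 (K : fieldType) (t : nat) (e : rel 'I_t) :
  simple_graph e ->
  v_number_is (@edge_ideal K t e) 1 ->
  forall n : nat, (1 <= n)%N ->
    v_number_is (ideal_pow (@edge_ideal K t e) n.+1) (2 * n + 1).
Proof.
move=> Hg Hv n hn.
have [x [y [exy Hdom]]] := HX Hg Hv.
case: Hg => Hsym Hirr.
split.
  exists ('X_[fmon x y n]), (fun g => sigma e x g = 0); split.
  - have h : mdeg (fmon x y n) = (2 * n + 1)%N.
      by rewrite /fmon mdegD !mdegMn !mdeg1; lia.
    by rewrite dhomogX; apply/eqP; exact: h.
  - split; first exact: prime_sigma.
    by exists ('X_[fmon x y n]) => g; exact: (UB_colon Hirr exy Hdom).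
  - by move=> g; exact: (UB_colon Hirr exy Hdom).
move=> k' f P hk hf HA; exact: (LB exy hk hf HA).
Qed.
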